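(* Fix $n\ge1$. Conditionally on the blocks $\mathbf{B}_0,\mathbf{B}_1,\dots$, let $J_{n,0},\dots,J_{n,n-1},\Delta'_{n,0},\dots,\Delta'_{n,n-1}$ be independent random variables with $J_{n,k}\sim\mathrm{Be}(W_k/S_k)$ (so $J_{n,0}=1$) and $\Delta'_{n,k}$ distributed as $D'_k(H'_k,U_k)$ with $U_k$ chosen in $B_k$ according to $P'_k$, and put $Y_{n,k}=J_{n,k}\Delta'_{n,k}$. Then the insertion depth $\Delta_n$ of the random recursive metric space $\mathbf{G}_n$ has the same distribution as $\sum_{k=0}^{n-1}Y_{n,k}$.
   Context: A block is a random element $\mathbf{B}=(B,D',H',P',W)$ of $\mathcal{X}^\bullet\times\mathbb{R}$, where $\mathcal{X}^\bullet$ is the Polish space (with the hooked Gromov–Prokhorov metric) of hook-preserving-isometry classes of hooked complete separable metric probability spaces $(B,D',H',P')$ with $P'$ a Borel probability measure of full support and $H'\in B$ a distinguished point called the hook; $W\ge 0$ is the weight. The blocks $\mathbf{B}_n=(B_n,D'_n,H'_n,P'_n,W_n)$, $n\ge1$, are i.i.d., with $\mathbb{E}[W_n]>0$; $\mathbf{B}_0=(B_0,D'_0,H,P'_0,W_0)$ is independent of them, may have a different distribution, and satisfies $W_0>0$. Set $\mathbf{G}_0=\mathbf{B}_0$, i.e. $G_0=B_0$, $D_0=D'_0$, $P_0=P'_0$, $S_0=W_0$; the point $H$ is the master hook. For $n\ge0$, given everything so far, choose a latch $v_{n+1}\in G_n$ according to $P_n$, and form $G_{n+1}$ by gluing $B_{n+1}$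 to $G_n$ by identifying $H'_{n+1}$ with $v_{n+1}$, with $D_{n+1}$ the glued metric, $S_{n+1}=S_n+W_{n+1}$ (so $S_k=\sum_{i=0}^k W_i$), and $P_{n+1}=\frac{S_n}{S_{n+1}}\widehat{P_n}+\frac{W_{n+1}}{S_{n+1}}\widehat{P'_{n+1}}$, where $\widehat{P_n}(A)=P_n(A\cap G_n)$ and $\widehat{P'_{n+1}}(A)=P'_{n+1}(A\cap B_{n+1})$. The insertion depth is $\Delta_n=D_n(H,v_n)$. *)

(* Defs.v *)
From HB Require Import structures.
From mathcomp Require Import all_boot all_order all_algebra.
From mathcomp Require Import all_classical all_reals all_analysis.
Set Implicit Arguments. Unset Strict Implicit. Unset Printing Implicit Defensive.
Import Order.TTheory GRing.Theory Num.Theory.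
Local Open Scope classical_set_scope.
Local Open Scope ring_scope.

Section RRMS.
Context {R : realType} {d : nat -> measure_display} (T : forall k, measurableType (d k)).

(* A point of the glued space G_m is represented by a pair (k, x) with x in
   the block B_k (k <= m); the hook of B_k (k >= 1) is identified with the
   latch v_k.  The master hook H is the hook of B_0. *)
Definition pt := {k : nat & T k}.

Variables (D' : forall k, T k -> T k -> R) (h : forall k, T k).

(* Glued metric restricted to distances from the master hook H = h 0:
   for y in B_k (k >= 1) glued at latch v_k, D(H, y) = D(H, v_k) + D'_k(H'_k, y);
   for y in B_0, D(H, y) = D'_0(H, y).  [fuel] only ensures termination; it is
   large enough whenever latches v_k lie in blocks of index < k. *)
Fixpoint depthF (v : nat -> pt) (fuel : nat) (p : pt) : R :=
  let k := projT1 p in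
  match fuel with
  | 0 => D' (h k) (projT2 p)
  | f.+1 => D' (h k) (projT2 p) + (if k == 0%N then 0 else depthF v f (v k))
  end.

Definition depth (v : nat -> pt) (p : pt) : R := depthF v (projT1 p) p.

Definition Ssum (W : nat -> R) (m : nat) : R := \sum_(i < m.+1) W i.

Variables (P' : forall k, probability (T k) R) (W : nat -> R).

(* Integral of g : pt -> \bar R against the measure P_m on G_m, i.e. the
   mixture sum_{k<=m} (W_k/S_m) P'_k (pushed onto G_m). *)
Definition mixInt (m : nat) (g : pt -> \bar R) : \bar R :=
  (\sum_(k < m.+1) ((W k / Ssum W m)%:E * \int[P' k]_x g (existT _ (k : nat) x)))%E.

Definition upd (v : nat -> pt) (j : nat) (p : pt) : nat -> pt :=
  fun i => if i == j then p else v i.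

(* Expectation of a functional F of the latch sequence, where, for
   m = m0, ..., m0 + r - 1, the latch v_{m+1} is drawn according to P_m given
   everything so far (sequential / Ionescu-Tulcea construction). *)
Fixpoint latchInt (r m : nat) (F : (nat -> pt) -> \bar R) (v : nat -> pt) : \bar R :=
  match r with
  | 0 => F v
  | r'.+1 => mixInt m (fun p => latchInt r' m.+1 F (upd v m.+1 p))
  end.

(* Initial (irrelevant) value of the latch sequence. *)
Definition v_init : nat -> pt := fun _ => existT _ 0%N (h 0%N).

Definition insertion_depth_prob (n : nat) (A : set R) : \bar R :=
  latchInt n 0 (fun v => (\1_A (depth v (v n)))%:E) v_init.

End RRMS.

(* Mutual independence of the 2n real random variables J_0..J_{n-1},
   X_0..X_{n-1}: product rule for all events (taking setT recovers
   all subfamilies). *)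
Definition mutually_independent2 {R : realType} {dO : measure_display}
  {O : measurableType dO} (P : probability O R) (n : nat) (J X : nat -> O -> R) :=
  forall A B : nat -> set R, (forall k, measurable (A k)) -> (forall k, measurable (B k)) ->
  P (\bigcap_(k in [set k | (k < n)%N]) (J k @^-1` A k `&` X k @^-1` B k)) =
  (\prod_(k < n) (P (J k @^-1` A k) * P (X k @^-1` B k)))%E.

(* Main.v *)
Require Import Defs.
From HB Require Import structures.
From mathcomp Require Import all_boot all_order all_algebra.
From mathcomp Require Import all_classical all_reals all_analysis.
From mathcomp Require Import measurable_realfun.
From mathcomp Require Import ring lra.
Import Order.TTheory GRing.Theory Num.Theory.
Local Open Scope classical_set_scope.
Local Open Scope ring_scope.

Section SumLaw.
Context {R : realType} {dO : measure_display} {O : measurableType dO} (P : probability O R).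
Definition mkf (f : O -> R) (mf : measurable_fun setT f) : {mfun O >-> R} :=
  HB.pack f (isMeasurableFun.Build _ _ _ _ f mf).

Definition law {f : O -> R} (mf : measurable_fun setT f) := distribution P (mkf f mf).

Local Open Scope ereal_scope.

Lemma lawE (f : O -> R) (mf : measurable_fun setT f) (C : set R) : law mf C = P (f @^-1` C).
Proof. by []. Qed.

Variables (X Y : O -> R) (mX : measurable_fun setT X) (mY : measurable_fun setT Y).
Variables (E : set O) (mE : measurable E).

Let XY := fun w => (X w, Y w).
Let mXY : measurable_fun setT XY := measurable_fun_pair mX mY.

Definition nu0 (S : set (R * R)) := P (XY @^-1` S `&` E).

Let nu00 : nu0 set0 = 0.
Proof. by rewrite /nu0 preimage_set0 set0I measure0. Qed.

Let nu0_ge0 S : 0 <= nu0 S.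
Proof. exact: measure_ge0. Qed.

Let nu0_sa : semi_sigma_additive nu0.
Proof.
move=> F mF tF mUF; rewrite /nu0 preimage_bigcup setI_bigcupl.
have mF' n : measurable (XY @^-1` F n `&` E).
  by apply: measurableI => //; rewrite -[X in measurable X]setTI; exact: mXY.
apply: measure_semi_sigma_additive => //.
- apply/trivIsetP => i j _ _ ij; rewrite setIACA -preimage_setI.
  by move/trivIsetP : tF => /(_ _ _ _ _ ij) ->//; rewrite preimage_set0 set0I.
- by rewrite -setI_bigcupl -preimage_bigcup; apply: measurableI => //;
    rewrite -[X in measurable X]setTI; exact: mXY.
Qed.

HB.instance Definition _ := isMeasure.Build _ _ _ nu0 nu00 nu0_ge0 nu0_sa.

Lemma sum_law (c : \bar R) : 0 <= c -> c \is a fin_num ->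
  (forall C B, measurable C -> measurable B ->
     P (X @^-1` C `&` Y @^-1` B `&` E) = c * (P (X @^-1` C) * P (Y @^-1` B))) ->
  forall S, measurable S -> nu0 S = c * (law mX \x law mY) S.
Proof.
move=> c0 cfin Hc S mS.
have [ce|cn0] := eqVneq c 0.
  subst c.
  transitivity (0 : \bar R); last exact: (esym (mul0e _)).
  have PE : P E = 0.
    have := Hc setT setT measurableT measurableT.
    rewrite !preimage_setT !setTI => ->; exact: mul0e.
  apply: le_anti; apply/andP; split; last exact: measure_ge0.
  rewrite -PE /nu0; apply: le_measure; rewrite ?inE //.
  - by apply: measurableI => //; rewrite -[X in measurable X]setTI; exact: mXY.

have [r rE] : exists r : R, c = r%:E by exists (fine c); rewrite fineK.
have r0 : (0 < r)%R by rewrite -lte_fin -rE lt_def cn0 c0.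
have ri0 : (0 <= r^-1)%R by rewrite invr_ge0 ltW.
pose m' := mscale (NngNum ri0) nu0.
have H' : forall A B, measurable A -> measurable B ->
    m' (A `*` B) = law mX A * law mY B.
  move=> A B mA mB; rewrite /m' /mscale /= /nu0.
  have -> : XY @^-1` (A `*` B) = X @^-1` A `&` Y @^-1` B by [].
  rewrite Hc // rE muleA -EFinM mulVf ?gt_eqF // mul1e.
  by rewrite !lawE.
have := product_measure_unique (m1 := law mX) (m2 := law mY) (m' := m') H' mS.
by move=> ->; rewrite /m' /mscale /= rE muleA -EFinM mulfV ?gt_eqF // mul1e.
Qed.

End SumLaw.

Section PF.
Context {R : realType} {d1 d2 : measure_display} {T1 : measurableType d1} {T2 : measurableType d2}.
Variables (m : {measure set T1 -> \bar R}) (phi : T1 -> T2) (mphi : measurable_fun setT phi).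

Definition pf of measurable_fun setT phi := pushforward m phi.

Let pf0 : pf mphi set0 = 0%E.
Proof. by rewrite /pf /pushforward preimage_set0 measure0. Qed.

Let pf_ge0 A : (0 <= pf mphi A)%E.
Proof. exact: measure_ge0. Qed.

Let pf_sa : semi_sigma_additive (pf mphi).
Proof.
move=> F mF tF mUF; rewrite /pf /pushforward preimage_bigcup.
apply: measure_semi_sigma_additive.
- by move=> n; rewrite -[X in measurable X]setTI; exact: mphi.
- apply/trivIsetP => /= i j _ _ ij; rewrite -preimage_setI.
  by move/trivIsetP : tF => /(_ _ _ _ _ ij) ->//; rewrite preimage_set0.
- by rewrite -preimage_bigcup -[X in measurable X]setTI; exact: mphi.
Qed.

HB.instance Definition _ := isMeasure.Build _ _ _ (pf mphi) pf0 pf_ge0 pf_sa.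

End PF.

Section RHS.
Context {R : realType} {d : nat -> measure_display} (T : forall k, measurableType (d k))
  (D' : forall k, T k -> T k -> R) (h : forall k, T k)
  (P' : forall k, probability (T k) R) (W : nat -> R).
Hypothesis hD0 : forall k : nat, D' k (h k) (h k) = 0.

Local Notation dep := (depth D' h).
Local Notation depF := (depthF D' h).

Definition wf (v : nat -> pt T) :=
  v 0%N = existT T 0%N (h 0%N) /\ forall k, (0 < k)%N -> (projT1 (v k) < k)%N.

Lemma depthF_fuel v : wf v -> forall N f p, (f <= N)%N -> (projT1 p <= f)%N ->
  depF v f p = dep v p.
Proof.
move=> [v0 vlt]; elim=> [|N IH] f [k x] /= fN pf.
  move: fN; rewrite leqn0 => /eqP f0; subst f.
  by move: pf; rewrite leqn0 => /eqP k0; subst k.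
case: f fN pf => [|f] fN pf.
  by move: pf; rewrite leqn0 => /eqP k0; subst k.
rewrite /depth /=.
case: k x pf => [|k] x pf /=; first by rewrite addr0.
congr (_ + _).
have hk := vlt k.+1 isT.
have kf : (k <= f)%N by [].
have fN' : (f <= N)%N by [].
have hk' : (projT1 (v k.+1) <= k)%N by [].
rewrite (IH f) //; last exact: leq_trans hk' kf.
by rewrite (IH k) // (leq_trans kf fN').
Qed.

Lemma depth_w0 v : wf v -> dep v (v 0%N) = 0.
Proof. by move=> [v0 _]; rewrite v0 /depth /= hD0. Qed.

Lemma depth_unfold v : wf v -> forall k x,
  dep v (existT T k x) = D' k (h k) x + dep v (v k).
Proof.
move=> wv [|k] x; first by rewrite depth_w0 // addr0.
rewrite {1}/depth /=; congr (_ + _).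
apply: (@depthF_fuel v wv k k) => //.
by rewrite -ltnS; case: wv => _ /(_ k.+1 isT).
Qed.

Lemma depth_agree u v : wf u -> wf v -> forall N p, (projT1 p <= N)%N ->
  (forall i, (0 < i)%N -> (i <= N)%N -> u i = v i) -> dep u p = dep v p.
Proof.
move=> wu wv; elim=> [|N IH] [k x] /= pN uv.
  by move: pN; rewrite leqn0 => /eqP k0; subst k; rewrite !depth_unfold // !depth_w0.
rewrite !depth_unfold //; congr (_ + _).
case: k x pN => [|k] x pN; first by rewrite !depth_w0.
rewrite uv //; apply: IH.
  by case: wv => _ /(_ k.+1 isT) hk; rewrite -ltnS (leq_trans hk).
by move=> i i0 iN; apply: uv => //; rewrite (leq_trans iN).
Qed.

Lemma wf_upd v j p : wf v -> (0 < j)%N -> (projT1 p < j)%N -> wf (upd v j p).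
Proof.
move=> [v0 vlt] j0 pj; split; first by rewrite /upd; case: eqP => // e; rewrite -e in j0.
move=> k k0; rewrite /upd; case: eqP => [->//|_]; exact: vlt.
Qed.

Lemma wf_le v m i : wf v -> (i < m.+1)%N -> (projT1 (v i) <= m)%N.
Proof.
case=> v0 vlt; case: i => [|i] ile; first by rewrite v0.
by rewrite -ltnS; exact: leq_trans (vlt i.+1 isT) (ltnW ile).
Qed.

Lemma wf_init : wf (v_init h).
Proof. by split. Qed.


Hypothesis Hmeas : forall k : nat, measurable_fun setT (D' k (h k)).
Hypothesis HW : forall k : nat, 0 <= W k.
Hypothesis HW0 : 0 < W 0%N.

Local Open Scope ereal_scope.

Definition Mop (k : nat) (f : R -> \bar R) (c : R) : \bar R :=
  \int[P' k]_x f (c + D' k (h k) x)%R.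

Lemma Mop_meas (k : nat) (f : R -> \bar R) : measurable_fun setT f -> (forall c, 0 <= f c) ->
  measurable_fun setT (Mop k f).
Proof.
move=> mf f0.
have mf' : measurable_fun setT (fun z : R * T k => f (z.1 + D' k (h k) z.2)%R).
  apply: (measurableT_comp mf); apply: measurable_funD => //.
  exact: (measurableT_comp (Hmeas k) measurable_snd).
exact: (measurable_fun_fubini_tonelli_F (m2 := P' k) _ mf' (fun z => f0 _)).
Qed.

Lemma Mop_ge0 (k : nat) (f : R -> \bar R) : (forall c, 0 <= f c) -> forall c, 0 <= Mop k f c.
Proof. by move=> f0 c; apply: integral_ge0 => x _. Qed.

Lemma Mop_lin (k : nat) (a b : R) (f g : R -> \bar R) : (0 <= a)%R -> (0 <= b)%R ->
  measurable_fun setT f -> measurable_fun setT g ->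
  (forall c, 0 <= f c) -> (forall c, 0 <= g c) ->
  Mop k (fun c => a%:E * f c + b%:E * g c) = (fun c => a%:E * Mop k f c + b%:E * Mop k g c).
Proof.
move=> a0 b0 mf mg f0 g0; apply/funext => c; rewrite /Mop.
have mD : forall F : R -> \bar R, measurable_fun setT F -> measurable_fun setT (fun x : T k => F (c + D' k (h k) x)%R).
  by move=> F mF; exact: (measurableT_comp mF (measurable_funD (measurable_cst c) (Hmeas k))).
have mf1 := mD _ mf; have mg1 := mD _ mg.
have a0' : 0 <= a%:E by rewrite lee_fin.
have b0' : 0 <= b%:E by rewrite lee_fin.
rewrite (ge0_integralD (P' k) measurableT (fun x _ => mule_ge0 a0' (f0 _))
  (measurable_funeM _ mf1) (fun x _ => mule_ge0 b0' (g0 _)) (measurable_funeM _ mg1)).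
rewrite (ge0_integralZl (P' k) measurableT mf1 (fun x _ => f0 _) a0').
by rewrite (ge0_integralZl (P' k) measurableT mg1 (fun x _ => g0 _) b0').
Qed.

Definition Step (m : nat) (H : nat -> R -> \bar R) : nat -> R -> \bar R :=
  fun k c => H k c + (W k / Ssum W m)%:E * Mop k (H m.+1) c.

Fixpoint Iter (r m : nat) (H : nat -> R -> \bar R) : nat -> R -> \bar R :=
  match r with
  | 0 => H
  | r'.+1 => Step m (Iter r' m.+1 H)
  end.

Lemma Ssum_gt0 m : (0 < Ssum W m)%R.
Proof.
rewrite /Ssum big_ord_recl /=; apply: (lt_le_trans HW0).
by rewrite lerDl; apply: sumr_ge0 => i _.
Qed.

Lemma wk_ge0 k m : (0 <= W k / Ssum W m)%R.
Proof. by rewrite divr_ge0 // ltW // Ssum_gt0. Qed.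

Lemma Iter_props r : forall m (H : nat -> R -> \bar R), (forall k, measurable_fun setT (H k)) ->
  (forall k c, 0 <= H k c) ->
  (forall k, measurable_fun setT (Iter r m H k)) /\ (forall k c, 0 <= Iter r m H k c).
Proof.
elim: r => [//|r IH] m H mH H0 /=.
have [mI I0] := IH m.+1 H mH H0.
split.
- move=> k; apply: emeasurable_funD => //.
  by apply: measurable_funeM; apply: Mop_meas.
- move=> k c; rewrite /Step; apply: adde_ge0 => //.
  by apply: mule_ge0; [rewrite lee_fin wk_ge0 | exact: Mop_ge0].
Qed.

Lemma sum_w m : (\sum_(k < m.+1) (W k / Ssum W m))%R = 1%R.
Proof.
by rewrite -mulr_suml -/(Ssum W m) mulfV // gt_eqF // Ssum_gt0.
Qed.


Lemma latch_sum r : forall m (H : nat -> R -> \bar R) v, wf v ->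
  (forall k, measurable_fun setT (H k)) -> (forall k c, 0 <= H k c) ->
  latchInt P' W r m (fun v' => \sum_(k < (m + r).+1) H k (dep v' (v' k))) v =
  \sum_(k < m.+1) Iter r m H k (dep v (v k)).
Proof.
elim: r => [|r IH] m H v wv mH H0; first by rewrite /= addn0.
rewrite -addSnnS /=.
have [mI I0] := Iter_props r m.+1 H mH H0.
set I := Iter r m.+1 H.
rewrite /mixInt.
set C := \sum_(i < m.+1) I i (dep v (v i)).
have C0 : 0 <= C by apply: sume_ge0 => i _.
transitivity (\sum_(k < m.+1) ((W k / Ssum W m)%:E *
    (C + Mop k (I m.+1) (dep v (v k))))).
  apply: eq_bigr => -[k kle] _ /=; congr (_ * _).
  have wu : forall x, wf (upd v m.+1 (existT T k x)) by move=> x; apply: wf_upd.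
  transitivity (\int[P' k]_x (C + I m.+1 (dep v (v k) + D' k (h k) x)%R)).
    apply: eq_integral => x _.
    rewrite IH //.
    rewrite big_ord_recr /=; congr (_ + _).
      apply: eq_bigr => -[i ile] _ /=; congr (I _ _).
      have im : i != m.+1 by rewrite neq_ltn ile.
      have -> : upd v m.+1 (existT T k x) i = v i by rewrite /upd (negbTE im).
      apply: (depth_agree _ _ (wu x) wv m) => //.
        exact: wf_le.
      by move=> j j0 jm; rewrite /upd ifN // neq_ltn ltnS jm.
    have -> : upd v m.+1 (existT T k x) m.+1 = existT T k x by rewrite /upd eqxx.
    rewrite depth_unfold // addrC; congr (Iter r m.+1 H _ _); congr (_ + _)%R.
    have km : k != m.+1 by rewrite neq_ltn kle.
    have -> : upd v m.+1 (existT T k x) k = v k by rewrite /upd (negbTE km).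
    apply: (depth_agree _ _ (wu x) wv m) => //.
      exact: wf_le.
    by move=> j j0 jm; rewrite /upd ifN // neq_ltn ltnS jm.
  have mF : measurable_fun setT (fun x : T k => I m.+1 (dep v (v k) + D' k (h k) x)%R).
    exact: (measurableT_comp (mI m.+1) (measurable_funD (measurable_cst _) (Hmeas k))).
  rewrite (ge0_integralD (P' k) measurableT (fun x _ => C0) (measurable_cst C)
    (fun x _ => I0 _ _) mF).
  rewrite integral_cst //; congr (_ + _); apply: (eq_trans _ (mule1 C)); congr (_ * _); exact: probability_setT.
transitivity (\sum_(k < m.+1) ((W k / Ssum W m)%:E * C) +
   \sum_(k < m.+1) ((W k / Ssum W m)%:E * Mop k (I m.+1) (dep v (v k)))).
  rewrite -big_split /=; apply: eq_bigr => k _.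
  by rewrite ge0_muleDr //; exact: Mop_ge0.
rewrite -(ge0_sume_distrl (index_enum _) C (P := xpredT) (F := fun k : 'I_m.+1 => (W k / Ssum W m)%:E)); last first.
  by move=> i _; rewrite lee_fin wk_ge0.
rewrite sumEFin sum_w mul1e /C -big_split /=.
by apply: eq_bigr => i _.
Qed.

Lemma Mop_scale (k : nat) (a : R) (f : R -> \bar R) : (0 <= a)%R ->
  measurable_fun setT f -> (forall c, 0 <= f c) ->
  Mop k (fun c => a%:E * f c) = (fun c => a%:E * Mop k f c).
Proof.
move=> a0 mf f0; apply/funext => c; rewrite /Mop.
have mf1 : measurable_fun setT (fun x : T k => f (c + D' k (h k) x)%R).
  exact: (measurableT_comp mf (measurable_funD (measurable_cst c) (Hmeas k))).
have a0' : 0 <= a%:E by rewrite lee_fin.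
by rewrite (ge0_integralZl (P' k) measurableT mf1 (fun x _ => f0 _) a0').
Qed.

Definition Op (k : nat) (f : R -> \bar R) (c : R) : \bar R :=
  (1 - W k / Ssum W k)%:E * f c + (W k / Ssum W k)%:E * Mop k f c.

Fixpoint Psi (r m : nat) (f : R -> \bar R) : R -> \bar R :=
  match r with
  | 0 => f
  | r'.+1 => Op m (Psi r' m.+1 f)
  end.

Lemma pk_le1 k : (W k / Ssum W k <= 1)%R.
Proof.
rewrite ler_pdivrMr ?Ssum_gt0 // mul1r /Ssum big_ord_recr /= lerDr.
by apply: sumr_ge0 => i _.
Qed.

Lemma Op_props k f : measurable_fun setT f -> (forall c, 0 <= f c) ->
  measurable_fun setT (Op k f) /\ (forall c, 0 <= Op k f c).
Proof.
move=> mf f0; split.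
- apply: emeasurable_funD; apply: measurable_funeM => //; exact: (Mop_meas k f mf f0).
- move=> c; apply: adde_ge0; apply: mule_ge0 => //.
  + by rewrite lee_fin subr_ge0 pk_le1.
  + by rewrite lee_fin wk_ge0.
  + exact: Mop_ge0.
Qed.

Lemma Psi_props r : forall m f, measurable_fun setT f -> (forall c, 0 <= f c) ->
  measurable_fun setT (Psi r m f) /\ (forall c, 0 <= Psi r m f c).
Proof.
elim: r => [//|r IH] m f mf f0 /=.
have [m1 p1] := IH m.+1 f mf f0.
exact: Op_props.
Qed.

Lemma Psi_S r : forall m f, Psi r.+1 m f = Psi r m (Op (m + r) f).
Proof.
elim: r => [|r IH] m f; first by rewrite /= addn0.
transitivity (Op m (Psi r.+1 m.+1 f)); first by [].
by rewrite IH addSnnS.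
Qed.

Definition H0 (n : nat) (f : R -> \bar R) : nat -> R -> \bar R :=
  fun k => if k == n then f else (fun _ => 0).

Lemma Iter_Psi n f : measurable_fun setT f -> (forall c, 0 <= f c) ->
  forall r m, (m + r).+1 = n -> forall k, (k <= m)%N ->
  Iter r.+1 m (H0 n f) k = (fun c => (W k / Ssum W m)%:E * Mop k (Psi r m.+1 f) c).
Proof.
move=> mf f0; elim=> [|r IH] m mn k km.
  rewrite addn0 in mn.
  rewrite /= /Step /H0 mn eqxx.
  have -> : (k == n) = false by apply/negbTE; rewrite -mn neq_ltn ltnS km.
  by apply/funext => c; rewrite add0e.
have mn' : (m.+1 + r).+1 = n by rewrite addSnnS.
transitivity (Step m (Iter r.+1 m.+1 (H0 n f)) k); first by [].
rewrite /Step (IH m.+1 mn' k (leqW km)) (IH m.+1 mn' m.+1 (leqnn _)).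
have [mP P0] := Psi_props r m.+2 f mf f0.
set Q := Psi r m.+2 f.
rewrite [Psi r.+1 m.+1 f]/= -/Q /Op.
have pm := wk_ge0 m.+1 m.+1.
have qm : (0 <= 1 - W m.+1 / Ssum W m.+1)%R by rewrite subr_ge0 pk_le1.
have mMQ := Mop_meas m.+1 Q mP P0.
have MQ0 := Mop_ge0 m.+1 Q P0.
rewrite (Mop_lin k _ _ _ _ qm pm mP mMQ P0 MQ0).
rewrite (Mop_scale k _ _ pm mMQ MQ0).
apply/funext => c.
have M1 := Mop_ge0 k Q P0 c.
have M2 := Mop_ge0 k _ (Mop_ge0 m.+1 Q P0) c.
rewrite -/Q.
have qE : 0 <= (1 - W m.+1 / Ssum W m.+1)%:E by rewrite lee_fin.
have pE : 0 <= (W m.+1 / Ssum W m.+1)%:E by rewrite lee_fin.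
move: M1 M2; set M1' := Mop k Q c; set M2' := Mop k (Mop m.+1 Q) c => M1 M2.
rewrite (ge0_muleDr _ (mule_ge0 qE M1) (mule_ge0 pE M2)) !muleA -!EFinM.
congr (_%:E * _ + _%:E * _).
have S0 := Ssum_gt0 m; have S1 := Ssum_gt0 m.+1.
have Ss : Ssum W m.+1 = (Ssum W m + W m.+1)%R by rewrite /Ssum big_ord_recr.
rewrite Ss in S1 *.
field.
by apply/andP; split; rewrite gt_eqF.
Qed.

Lemma RHS_Psi n (A : set R) : (1 <= n)%N -> measurable A ->
  insertion_depth_prob D' h P' W n A = Psi n 0 (fun c => (\1_A c)%:E) 0%R.
Proof.
move=> n1 mA.
set f := fun c : R => (\1_A c)%:E.
have mf : measurable_fun setT f by apply/measurable_EFinP; exact: measurable_indic.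
have f0 : forall c, 0 <= f c by move=> c; rewrite lee_fin.
rewrite /insertion_depth_prob.
have -> : (fun v => (\1_A (dep v (v n)))%:E) =
    (fun v => \sum_(k < (0 + n).+1) H0 n f k (dep v (v k))).
  apply/funext => v; rewrite add0n big_ord_recr /= big1 ?add0e.
    by rewrite /H0 eqxx.
  by move=> -[i ilt] _ /=; rewrite /H0 ifN // neq_ltn ilt.
rewrite latch_sum //; last 2 first.
- by move=> k; rewrite /H0; case: eqP => _ //; exact: measurable_cst.
- by move=> k c; rewrite /H0; case: eqP => _ //.
rewrite big_ord1 /= depth_w0; last exact: wf_init.
case: n n1 => [//|r] _.
rewrite (Iter_Psi _ _ mf f0 r 0 (erefl _) 0 (leqnn 0)) /= /Op.
have -> : (W 0%N / Ssum W 0 = 1)%R by rewrite /Ssum big_ord1 mulfV // gt_eqF.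
by rewrite subrr mul0e add0e !mul1e.
Qed.


Context {dO : measure_display} {O : measurableType dO} (P : probability O R)
  (J Dl : nat -> O -> R) (n : nat).
Hypothesis HJm : forall k, measurable_fun setT (J k).
Hypothesis HDlm : forall k, measurable_fun setT (Dl k).
Hypothesis Hind : mutually_independent2 P n J Dl.
Hypothesis HJ1 : forall k, (k < n)%N -> P (J k @^-1` [set 1%R]) = (W k / Ssum W k)%:E.
Hypothesis HJ0 : forall k, (k < n)%N -> P (J k @^-1` [set 0%R]) = (1 - W k / Ssum W k)%:E.
Hypothesis HDl : forall k, (k < n)%N -> forall A : set R, measurable A ->
      P (Dl k @^-1` A) = P' k (D' k (h k) @^-1` A).

Definition Z (j : nat) (w : O) : R := (\sum_(k < j) (J k w * Dl k w))%R.

Lemma ZS j w : Z j.+1 w = (Z j w + J j w * Dl j w)%R.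
Proof. by rewrite /Z big_ord_recr. Qed.

Lemma mZ j : measurable_fun setT (Z j).
Proof.
elim: j => [|j IH].
  have -> : Z 0 = cst 0%R by apply/funext => w; rewrite /Z big_ord0.
  exact: measurable_cst.
have -> : Z j.+1 = (Z j \+ (J j \* Dl j))%R by apply/funext => w; rewrite ZS.
by apply: measurable_funD => //; apply: measurable_funM.
Qed.

Lemma mpre (f : O -> R) (S : set R) : measurable_fun setT f -> measurable S ->
  measurable (f @^-1` S).
Proof. by move=> mf mS; rewrite -[X in measurable X]setTI; exact: mf. Qed.

Lemma Pfin (A : set O) : measurable A -> P A \is a fin_num.
Proof.
move=> mA; rewrite ge0_fin_numE ?measure_ge0 //.
exact: (le_lt_trans (probability_le1 P mA) (ltry _)).
Qed.

Definition Ev (A B : nat -> set R) : set O :=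
  \bigcap_(k in [set k | (k < n)%N]) (J k @^-1` A k `&` Dl k @^-1` B k).

Definition Pi (A B : nat -> set R) : \bar R :=
  \prod_(k < n) (P (J k @^-1` A k) * P (Dl k @^-1` B k)).

Definition Pi' (A B : nat -> set R) (j : nat) : \bar R :=
  \prod_(k < n | (k : nat) != j) (P (J k @^-1` A k) * P (Dl k @^-1` B k)).

Definition updf (A : nat -> set R) (j : nat) (S : set R) : nat -> set R :=
  fun k => if k == j then S else A k.

Lemma mEv A B : (forall k, measurable (A k)) -> (forall k, measurable (B k)) ->
  measurable (Ev A B).
Proof.
move=> mA mB; apply: bigcap_measurableType => k _.
by apply: measurableI; apply: mpre.
Qed.

Lemma Ev_updA A B j S : (j < n)%N -> A j = setT ->
  Ev (updf A j S) B = Ev A B `&` J j @^-1` S.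
Proof.
move=> jn Aj; apply/seteqP; split => w /=.
- move=> H; split.
    move=> k kn; have [H1 H2] := H k kn; split => //.
    by move: H1; rewrite /updf /=; case: eqP => [->|//]; rewrite Aj.
  by have [H1 _] := H j jn; move: H1; rewrite /updf eqxx.
- move=> [H Jw] k kn; have [H1 H2] := H k kn; split => //.
  by rewrite /updf /=; case: eqP => [->|//].
Qed.

Lemma Ev_updB A B j S : (j < n)%N -> B j = setT ->
  Ev A (updf B j S) = Ev A B `&` Dl j @^-1` S.
Proof.
move=> jn Bj; apply/seteqP; split => w /=.
- move=> H; split.
    move=> k kn; have [H1 H2] := H k kn; split => //.
    by move: H2; rewrite /updf /=; case: eqP => [->|//]; rewrite Bj.
  by have [_ H2] := H j jn; move: H2; rewrite /updf eqxx.
- move=> [H Jw] k kn; have [H1 H2] := H k kn; split => //.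
  by rewrite /updf /=; case: eqP => [->|//].
Qed.

Lemma Pi_upd A B A' B' j : (j < n)%N ->
  (forall k, k != j -> A' k = A k /\ B' k = B k) ->
  Pi A' B' = P (J j @^-1` A' j) * P (Dl j @^-1` B' j) * Pi' A B j.
Proof.
move=> jn AB; rewrite /Pi (bigD1 (Ordinal jn)) //=; congr (_ * _).
rewrite /Pi'; apply: eq_big => [k|k kj] //.
by have [-> ->] := AB _ kj.
Qed.

Lemma splitJ j (Xs : set O) : (j < n)%N -> measurable Xs ->
  P Xs = P (Xs `&` J j @^-1` [set 1%R]) + P (Xs `&` J j @^-1` [set 0%R]).
Proof.
move=> jn mX.
set G1 := J j @^-1` [set 1%R]; set G0 := J j @^-1` [set 0%R].
have mG1 : measurable G1 := mpre _ _ (HJm j) (measurable_set1 _).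
have mG0 : measurable G0 := mpre _ _ (HJm j) (measurable_set1 _).
have disj : G1 `&` G0 = set0.
  apply/seteqP; split => w //; rewrite /G1 /G0 /preimage /= => -[-> /eqP].
  by rewrite oner_eq0.
have mG : measurable (G1 `|` G0) by apply: measurableU.
have PG : P (G1 `|` G0) = 1.
  rewrite measureU //; apply: (eq_trans (congr2 _ (HJ1 j jn) (HJ0 j jn))).
  by rewrite -EFinD addrC subrK.
have PN : P (~` (G1 `|` G0)) = 0.
  by rewrite probability_setC // PG -EFinB subrr.
have mXG : measurable (Xs `&` (G1 `|` G0)) by apply: measurableI.
have mXN : measurable (Xs `&` ~` (G1 `|` G0)) by apply: measurableI => //; apply: measurableC.
have -> : P Xs = P (Xs `&` (G1 `|` G0)) + P (Xs `&` ~` (G1 `|` G0)).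
  rewrite -measureU //; last by rewrite setIACA setICr setI0.
  by rewrite -setIUr setUv setIT.
have -> : P (Xs `&` ~` (G1 `|` G0)) = 0.
  apply: le_anti; apply/andP; split; last exact: measure_ge0.
  rewrite -PN; apply: le_measure; rewrite ?inE //; by apply: measurableC.
rewrite adde0 setIUr measureU //; try by apply: measurableI.
by rewrite setIACA disj setI0.
Qed.

Definition Ij (j : nat) := forall A B, (forall k, measurable (A k)) -> (forall k, measurable (B k)) ->
  (forall k, (k < j)%N -> A k = setT /\ B k = setT) ->
  forall C, measurable C -> P (Z j @^-1` C `&` Ev A B) = P (Z j @^-1` C) * Pi A B.

Definition addR (z : R * R) : R := (z.1 + z.2)%R.
Lemma maddR : measurable_fun setT addR.
Proof. exact: measurable_funD measurable_fst measurable_snd. Qed.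

Definition SL (j : nat) (C : set R) := (law P (mZ j) \x law P (HDlm j)) (addR @^-1` C).

Lemma mupd (F : nat -> set R) j S : (forall k, measurable (F k)) -> measurable S ->
  forall k, measurable (updf F j S k).
Proof. by move=> mF mS k; rewrite /updf; case: eqP. Qed.

Lemma Pi'_ge0 A B j : 0 <= Pi' A B j.
Proof. by apply: prode_ge0 => k _; apply: mule_ge0; apply: measure_ge0. Qed.

Lemma Pi'_fin A B j : (forall k, measurable (A k)) -> (forall k, measurable (B k)) ->
  Pi' A B j \is a fin_num.
Proof.
move=> mA mB; apply: prode_fin_num => k _.
by rewrite fin_numM // Pfin //; apply: mpre.
Qed.

Lemma chain_step j (jn : (j < n)%N) : Ij j ->
  forall A B, (forall k, measurable (A k)) -> (forall k, measurable (B k)) ->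
  (forall k, (k <= j)%N -> A k = setT /\ B k = setT) -> forall C, measurable C ->
  P (Z j.+1 @^-1` C `&` Ev A B) =
  ((W j / Ssum W j)%:E * SL j C + (1 - W j / Ssum W j)%:E * P (Z j @^-1` C)) * Pi' A B j.
Proof.
move=> IH A B mA mB mask C mC.
set p := (W j / Ssum W j)%R.
have [Aj Bj] := mask j (leqnn j).
have mask0 : forall S k, (k < j)%N -> updf A j S k = setT /\ B k = setT.
  by move=> S k kj; rewrite /updf (ltn_eqF kj); exact: mask (ltnW kj).
have mask1 : forall S S' k, (k < j)%N -> updf A j S k = setT /\ updf B j S' k = setT.
  by move=> S S' k kj; rewrite /updf (ltn_eqF kj); exact: mask (ltnW kj).
have agr : forall S S' k, k != j -> updf A j S k = A k /\ updf B j S' k = B k.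
  by move=> S S' k kj; rewrite /updf (negbTE kj).
have agrA : forall S k, k != j -> updf A j S k = A k /\ B k = B k.
  by move=> S k kj; rewrite /updf (negbTE kj).
have mZC := mpre _ _ (mZ j.+1) mC.
have mEvAB := mEv _ _ mA mB.
rewrite (splitJ _ _ jn (measurableI _ _ mZC mEvAB)).
have E0 : Z j.+1 @^-1` C `&` Ev A B `&` J j @^-1` [set 0%R] =
    Z j @^-1` C `&` Ev (updf A j [set 0%R]) B.
  rewrite Ev_updA // setIA; apply/seteqP; split => w /= [[zc ev] jw];
    (split; [split|]) => //; move: zc; by rewrite ZS jw mul0r addr0.
have E1 : Z j.+1 @^-1` C `&` Ev A B `&` J j @^-1` [set 1%R] =
    (fun w => (Z j w, Dl j w)) @^-1` (addR @^-1` C) `&` Ev (updf A j [set 1%R]) B.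
  rewrite Ev_updA // setIA; apply/seteqP; split => w /= [[zc ev] jw];
    (split; [split|]) => //; move: zc; by rewrite /addR /= ZS jw mul1r.
rewrite E0 E1.
have mA0 := mupd A j [set 0%R] mA (measurable_set1 _).
have mA1 := mupd A j [set 1%R] mA (measurable_set1 _).
have T0 : P (Z j @^-1` C `&` Ev (updf A j [set 0%R]) B) =
    P (Z j @^-1` C) * ((1 - p)%:E * Pi' A B j).
  rewrite (IH _ _ mA0 mB (mask0 _) C mC) (Pi_upd _ _ _ _ _ jn (agrA _)).
  rewrite /updf eqxx Bj preimage_setT probability_setT mule1 (HJ0 j jn).
  by [].
have T1 : P ((fun w => (Z j w, Dl j w)) @^-1` (addR @^-1` C) `&` Ev (updf A j [set 1%R]) B) =
    (p%:E * Pi' A B j) * SL j C.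
  transitivity (nu0 P (Z j) (Dl j) (Ev (updf A j [set 1%R]) B) (addR @^-1` C)); first by [].
  rewrite (sum_law P _ _ (mZ j) (HDlm j) _ (mEv _ _ mA1 mB) (p%:E * Pi' A B j)) //.
  - by apply: mule_ge0; [rewrite lee_fin wk_ge0 | exact: Pi'_ge0].
  - by rewrite fin_numM // (Pi'_fin _ _ _ mA mB).
  - move=> C' B0 mC' mB0.
    rewrite -setIA (setIC (Dl j @^-1` B0)) -(Ev_updB _ _ _ _ jn Bj).
    rewrite (IH _ _ mA1 (mupd B j B0 mB mB0) (mask1 _ _) C' mC') (Pi_upd _ _ _ _ _ jn (agr _ _)).
    rewrite /updf eqxx (HJ1 j jn).
    by rewrite (muleAC p%:E) (muleCA (P (Z j @^-1` C'))).
  - by rewrite -[X in measurable X]setTI; exact: maddR.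
rewrite T1 T0 ge0_muleDl; last 2 first.
- by apply: mule_ge0; [rewrite lee_fin wk_ge0 | exact: measure_ge0].
- by apply: mule_ge0; [rewrite lee_fin subr_ge0 pk_le1 | exact: measure_ge0].
by rewrite (muleAC p%:E) muleA (muleC (P (Z j @^-1` C))).
Qed.

Lemma Ev_T : Ev (fun _ => setT) (fun _ => setT) = setT.
Proof. by apply/seteqP; split => // w _ k _. Qed.

Lemma PsetT1 : P setT = 1.
Proof. exact: probability_setT. Qed.

Lemma Pi'_T j : Pi' (fun _ => setT) (fun _ => setT) j = 1.
Proof.
apply: big1 => k _; rewrite !preimage_setT.
by apply: (eq_trans (congr2 _ PsetT1 PsetT1)); rewrite mule1.
Qed.

Lemma I0 : Ij 0.
Proof.
move=> A B mA mB _ C mC.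
have [C0|nC0] := pselect (C 0%R).
  have -> : Z 0 @^-1` C = setT.
    by apply/seteqP; split => // w _; rewrite /preimage /= /Z big_ord0.
  rewrite setTI; apply: (eq_trans (Hind A B mA mB)).
  apply: esym; apply: (eq_trans (congr2 _ PsetT1 (erefl (Pi A B)))); exact: mul1e.
have -> : Z 0 @^-1` C = set0.
  by apply/seteqP; split => // w; rewrite /preimage /= /Z big_ord0.
by rewrite set0I measure0 mul0e.
Qed.

Lemma chain_succ j : (j < n)%N -> Ij j -> Ij j.+1.
Proof.
move=> jn IH A B mA mB mask C mC.
have mask' : forall k, (k <= j)%N -> A k = setT /\ B k = setT by move=> k kj; exact: mask.
rewrite (chain_step _ jn IH _ _ mA mB mask' _ mC).
have := chain_step _ jn IH (fun _ => setT) (fun _ => setT)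
  (fun _ => measurableT) (fun _ => measurableT) (fun _ _ => conj erefl erefl) _ mC.
rewrite Ev_T setIT Pi'_T mule1 => <-.
congr (_ * _).
rewrite (Pi_upd A B A B j jn (fun k _ => conj erefl erefl)).
have [Aj Bj] := mask j (ltnSn j).
rewrite Aj Bj !preimage_setT.
apply: esym; apply: (eq_trans (congr2 _ (congr2 _ PsetT1 PsetT1) (erefl (Pi' A B j)))).
by rewrite mule1 mul1e.
Qed.

Lemma Ij_all j : (j <= n)%N -> Ij j.
Proof.
elim: j => [_|j IH] jn; first exact: I0.
by apply: chain_succ => //; apply: IH; exact: ltnW.
Qed.

Lemma lawS j : (j < n)%N -> forall C, measurable C ->
  P (Z j.+1 @^-1` C) =
  (W j / Ssum W j)%:E * SL j C + (1 - W j / Ssum W j)%:E * P (Z j @^-1` C).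
Proof.
move=> jn C mC.
have := chain_step _ jn (Ij_all _ (ltnW jn)) (fun _ => setT) (fun _ => setT)
  (fun _ => measurableT) (fun _ => measurableT) (fun _ _ => conj erefl erefl) _ mC.
by rewrite Ev_T setIT Pi'_T mule1.
Qed.

Lemma K j : (j <= n)%N -> forall f : R -> \bar R, measurable_fun setT f ->
  (forall c, 0 <= f c) -> \int[law P (mZ j)]_x f x = Psi j 0 f 0%R.
Proof.
elim: j => [|j IH] jn f mf f0.
  transitivity (\int[pushforward P (Z 0)]_x f x); first by [].
  rewrite (ge0_integral_pushforward (mZ 0) P measurableT mf (fun y _ => f0 y)) preimage_setT.
  rewrite (eq_integral (fun _ => f 0%R)); last by move=> x _; rewrite /= /Z big_ord0.
  rewrite integral_cst //; apply: (eq_trans _ (mule1 _)); congr (_ * _); exact: PsetT1.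
have jn' : (j < n)%N by [].
have p0 := wk_ge0 j j.
have q0 : (0 <= 1 - W j / Ssum W j)%R by rewrite subr_ge0 pk_le1.
have maddR' := maddR.
pose rho := measure_add (mscale (NngNum p0) (pf (law P (mZ j) \x law P (HDlm j)) addR maddR'))
  (mscale (NngNum q0) (law P (mZ j))).
have eqm : forall A, measurable A -> A `<=` setT -> law P (mZ j.+1) A = rho A.
  move=> A mA _; rewrite /rho measure_addE.
  transitivity (P (Z j.+1 @^-1` A)); first by [].
  by rewrite (lawS _ jn' _ mA).
rewrite (eq_measure_integral rho eqm).
rewrite ge0_integral_measure_add //.
rewrite !ge0_integral_mscale //; try by move=> x _; exact: f0.
have mfa : measurable_fun setT (f \o addR) by exact: measurableT_comp mf maddR.
transitivity ((W j / Ssum W j)%:E *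
    \int[law P (mZ j) \x law P (HDlm j)]_z (f \o addR) z +
  (1 - W j / Ssum W j)%:E * \int[law P (mZ j)]_x f x).
  congr (_ * _ + _); rewrite /pf.
  rewrite (ge0_integral_pushforward maddR' _ measurableT mf (fun y _ => f0 y)).
  by rewrite preimage_setT.
rewrite (fubini_tonelli1 (f \o addR) mfa (fun z => f0 _)).
have FM : forall x, fubini_F (law P (HDlm j)) (f \o addR) x = Mop j f x.
  move=> x; rewrite /fubini_F /Mop.
  have mfx : measurable_fun setT (fun y : R => f (x + y)%R).
    have mxy : measurable_fun setT (fun y : R => (x + y)%R).
      exact: (measurable_funD (measurable_cst x) (@measurable_id _ R setT)).
    exact: (measurableT_comp mf mxy).
  transitivity (\int[pushforward (P' j) (D' j (h j))]_y f (x + y)%R).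
    apply: eq_measure_integral => A mA _.
    transitivity (P (Dl j @^-1` A)); first by [].
    by rewrite (HDl j jn' _ mA).
  rewrite (ge0_integral_pushforward (Hmeas j) (P' j) measurableT mfx (fun y _ => f0 _)).
  by rewrite preimage_setT.
rewrite (eq_integral (Mop j f)); last by move=> x _; exact: FM.
have [mOp Op0] := Op_props j f mf f0.
rewrite Psi_S add0n -(IH (ltnW jn) _ mOp Op0) /Op.
have mM := Mop_meas j f mf f0.
have M0 := Mop_ge0 j f f0.
have q0' : 0 <= (1 - W j / Ssum W j)%:E by rewrite lee_fin.
have p0' : 0 <= (W j / Ssum W j)%:E by rewrite lee_fin.
rewrite (ge0_integralD _ measurableT (fun x _ => mule_ge0 q0' (f0 x)) (measurable_funeM _ mf)
  (fun x _ => mule_ge0 p0' (M0 x)) (measurable_funeM _ mM)).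
rewrite (ge0_integralZl _ measurableT mf (fun x _ => f0 x) q0').
rewrite (ge0_integralZl _ measurableT mM (fun x _ => M0 x) p0').
by rewrite addeC.
Qed.

Lemma LHS_Psi (A : set R) : measurable A ->
  P [set w | (\sum_(k < n) (J k w * Dl k w))%R \in A] = Psi n 0 (fun c => (\1_A c)%:E) 0%R.
Proof.
move=> mA.
set f := fun c : R => (\1_A c)%:E.
have mf : measurable_fun setT f by apply/measurable_EFinP; exact: measurable_indic.
have f0 : forall c, 0 <= f c by move=> c; rewrite lee_fin.
rewrite -(K _ (leqnn n) f mf f0) integral_indic // setIT.
transitivity (P (Z n @^-1` A)); last by [].
by congr (P _); apply/seteqP; split => w; rewrite /= inE.
Qed.

Lemma main_sec (A : set R) : (1 <= n)%N -> measurable A ->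
  P [set w | (\sum_(k < n) (J k w * Dl k w))%R \in A] =
  insertion_depth_prob D' h P' W n A.
Proof. by move=> n1 mA; rewrite LHS_Psi // RHS_Psi. Qed.

End RHS.

Theorem lemma3p1 (R : realType) (d : nat -> measure_display)
  (T : forall k, measurableType (d k))
  (D' : forall k, T k -> T k -> R) (h : forall k, T k)
  (P' : forall k, probability (T k) R) (W : nat -> R)
  (* each block is a metric space ... *)
  (HD0 : forall k (x y : T k), D' k x y = 0 <-> x = y)
  (HDsym : forall k (x y : T k), D' k x y = D' k y x)
  (HDtri : forall k (x y z : T k), D' k x z <= D' k x y + D' k y z)
  (* ... whose probability measure has full support ... *)
  (Hsupp : forall k (x : T k) (r : R), 0 < r -> (0 < P' k [set y | (D' k x y < r)%R])%E)
  (* ... and distance to the hook is measurable (Borel) *)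
  (Hmeas : forall k, measurable_fun setT (D' k (h k)))
  (HW : forall k, 0 <= W k) (HW0 : 0 < W 0%N)
  (n : nat) (Hn : (1 <= n)%N)
  (dO : measure_display) (O : measurableType dO) (P : probability O R)
  (J Dl : nat -> O -> R)
  (HJm : forall k, measurable_fun setT (J k))
  (HDlm : forall k, measurable_fun setT (Dl k))
  (Hind : mutually_independent2 P n J Dl)
  (HJ1 : forall k, (k < n)%N -> P (J k @^-1` [set 1]) = (W k / Ssum W k)%:E)
  (HJ0 : forall k, (k < n)%N -> P (J k @^-1` [set 0]) = (1 - W k / Ssum W k)%:E)
  (HDl : forall k, (k < n)%N -> forall A : set R, measurable A ->
      P (Dl k @^-1` A) = P' k (D' k (h k) @^-1` A)) :
  forall A : set R, measurable A ->
    P [set w | \sum_(k < n) (J k w * Dl k w) \in A] =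
    insertion_depth_prob D' h P' W n A.
Proof.
move=> A mA.
have hD0 : forall k : nat, D' k (h k) (h k) = 0 by move=> k; apply/HD0.
exact: (main_sec T D' h P' W hD0 Hmeas HW HW0 P J Dl n HJm HDlm Hind HJ1 HJ0 HDl A Hn mA).
Qed.
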